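(* $2^5\rightarrow 167\rightrightarrows 19$: there is an injective isotone map $\varphi:\mathbf 2^5\to F_4^-$ such that $\{\varphi(x)[p_1:=e]: x\in\mathbf 2^5,\ e\in\{0,1\}\}\supseteq F_3^-$.
   Context: $F_k$ is the set of monotone Boolean functions of $k$ variables $p_1,\dots,p_k$ (including constants $0,1$), ordered pointwise; $F_k^-=F_k\setminus\{0\}$. For $g\in F_k$ and $e\in\{0,1\}$, $g[p_1:=e]$ is the function of $p_2,\dots,p_k$ obtained by substituting $e$ for $p_1$. $\mathbf 2^i$ is $\{0,1\}^i$ with the coordinatewise order; isotone means order-preserving. Notation: $2^i\rightarrow|F_j^-|\rightrightarrows|F_{j-1}^-|$ means there is an injective isotone $\varphi:\mathbf 2^i\to F_j^-$ such that every element of $F_{j-1}^-$ equals $\varphi(x)[p_1:=e]$ for some $x$, $e$. Here $|F_3^-|=19$, $|F_4^-|=167$. *)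

(* Defs.v *)
From mathcomp Require Import all_boot.
Set Implicit Arguments. Unset Strict Implicit. Unset Printing Implicit Defensive.

(* An assignment to the variables p_1,...,p_k: variable p_(i+1) is index i : 'I_k. *)
Definition assign (k : nat) := {ffun 'I_k -> bool}.

Definition boolfun (k : nat) := {ffun assign k -> bool}.

Definition le_assign (k : nat) (x y : assign k) : bool :=
  [forall i, x i ==> y i].

Definition le_fun (k : nat) (f g : boolfun k) : bool :=
  [forall x, f x ==> g x].

Definition monotone_bf (k : nat) (f : boolfun k) : bool :=
  [forall x, forall y, le_assign x y ==> (f x ==> f y)].

Definition zero_bf (k : nat) : boolfun k := [ffun _ => false].

Definition in_Fminus (k : nat) (f : boolfun k) : bool :=
  monotone_bf f && (f != zero_bf k).

(* g[p_1 := e]: substitute e for the first variable p_1 (index ord0);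
   the remaining variables p_2..p_(k+1) become p_1..p_k of the result. *)
Definition subst1 (k : nat) (g : boolfun k.+1) (e : bool) : boolfun k :=
  [ffun y : assign k =>
     g [ffun i : 'I_k.+1 => if unlift ord0 i is Some j then y j else e]].

(* Main.v *)
Require Import Defs.
From mathcomp Require Import all_boot.

Definition tA : seq nat := [:: 0; 128; 128; 136; 128; 168; 128; 232; 128; 136; 224; 234; 160; 234; 240; 250; 0; 160; 192; 248; 224; 234; 248; 254; 160; 170; 240; 254; 236; 238; 252; 255].
Definition tB : seq nat := [:: 128; 136; 200; 204; 168; 234; 238; 254; 232; 234; 232; 238; 234; 250; 254; 255; 160; 254; 232; 254; 248; 255; 255; 255; 248; 254; 250; 254; 254; 255; 255; 255].

Definition bit (n i : nat) : bool := odd (n %/ 2 ^ i).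

Definition c3 (x : assign 3) : nat :=
  x (inord 0) + 2 * x (inord 1) + 4 * x (inord 2).
Definition c4 (x : assign 4) : nat :=
  x (inord 0) + 2 * x (inord 1) + 4 * x (inord 2) + 8 * x (inord 3).
Definition c5 (x : assign 5) : nat :=
  x (inord 0) + 2 * x (inord 1) + 4 * x (inord 2) + 8 * x (inord 3) + 16 * x (inord 4).

Lemma c3_bit (x : assign 3) (i : 'I_3) : x i = bit (c3 x) i.
Proof.
rewrite -[i]inord_val; case: i => m Hm /=; rewrite /c3.
case: m Hm => [|[|[|m]]] Hm //; rewrite inordK //;
case: (x (inord 0)); case: (x (inord 1)); case: (x (inord 2)) => //.
Qed.

Lemma c4_bit (x : assign 4) (i : 'I_4) : x i = bit (c4 x) i.
Proof.
rewrite -[i]inord_val; case: i => m Hm /=; rewrite /c4.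
case: m Hm => [|[|[|[|m]]]] Hm //; rewrite inordK //;
case: (x (inord 0)); case: (x (inord 1)); case: (x (inord 2)); case: (x (inord 3)) => //.
Qed.

Lemma c5_bit (x : assign 5) (i : 'I_5) : x i = bit (c5 x) i.
Proof.
rewrite -[i]inord_val; case: i => m Hm /=; rewrite /c5.
case: m Hm => [|[|[|[|[|m]]]]] Hm //; rewrite inordK //;
case: (x (inord 0)); case: (x (inord 1)); case: (x (inord 2)); case: (x (inord 3));
case: (x (inord 4)) => //.
Qed.

Lemma c3_lt x : c3 x < 8.
Proof. rewrite /c3; case: (x (inord 0)); case: (x (inord 1)); case: (x (inord 2)) => //. Qed.
Lemma c4_lt x : c4 x < 16.
Proof. rewrite /c4; case: (x (inord 0)); case: (x (inord 1)); case: (x (inord 2)); case: (x (inord 3)) => //. Qed.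
Lemma c5_lt x : c5 x < 32.
Proof. rewrite /c5; case: (x (inord 0)); case: (x (inord 1)); case: (x (inord 2)); case: (x (inord 3)); case: (x (inord 4)) => //. Qed.

Lemma c3_inj : injective c3.
Proof. by move=> x y H; apply/ffunP => i; rewrite c3_bit H -c3_bit. Qed.
Lemma c4_inj : injective c4.
Proof. by move=> x y H; apply/ffunP => i; rewrite c4_bit H -c4_bit. Qed.
Lemma c5_inj : injective c5.
Proof. by move=> x y H; apply/ffunP => i; rewrite c5_bit H -c5_bit. Qed.

Definition mk (k : nat) (n : nat) : assign k := [ffun i : 'I_k => bit n i].

Lemma c3_mk n : n < 8 -> c3 (mk 3 n) = n.
Proof.
rewrite /c3 !ffunE !inordK //.
have: all (fun n => bit n 0 + 2 * bit n 1 + 4 * bit n 2 == n) (iota 0 8) by [].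
by move/allP/(_ n) => H Hn; apply/eqP/H; rewrite mem_iota.
Qed.
Lemma c4_mk n : n < 16 -> c4 (mk 4 n) = n.
Proof.
rewrite /c4 !ffunE !inordK //.
have: all (fun n => bit n 0 + 2 * bit n 1 + 4 * bit n 2 + 8 * bit n 3 == n) (iota 0 16) by [].
by move/allP/(_ n) => H Hn; apply/eqP/H; rewrite mem_iota.
Qed.
Lemma c5_mk n : n < 32 -> c5 (mk 5 n) = n.
Proof.
rewrite /c5 !ffunE !inordK //.
have: all (fun n => bit n 0 + 2 * bit n 1 + 4 * bit n 2 + 8 * bit n 3 + 16 * bit n 4 == n) (iota 0 32) by [].
by move/allP/(_ n) => H Hn; apply/eqP/H; rewrite mem_iota.
Qed.

Definition lecode (k a b : nat) := all (fun i => bit a i ==> bit b i) (iota 0 k).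

Lemma le_code (k : nat) (c : assign k -> nat)
  (cb : forall (x : assign k) (i : 'I_k), x i = bit (c x) i) (x y : assign k) :
  le_assign x y = lecode k (c x) (c y).
Proof.
apply/forallP/allP.
  move=> H i; rewrite mem_iota add0n => Hi.
  by move: (H (Ordinal Hi)); rewrite !cb.
by move=> H i; rewrite !cb; apply: H; rewrite mem_iota add0n ltn_ord.
Qed.

Definition P (a y : nat) : bool :=
  odd (nth 0 (if odd y then tB else tA) a %/ 2 ^ (y./2)).

Definition phi0 (x : assign 5) : boolfun 4 := [ffun z : assign 4 => P (c5 x) (c4 z)].

Lemma all_iota {Q : pred nat} {k} : all Q (iota 0 k) -> forall {n}, n < k -> Q n.
Proof. by move/allP=> H n Hn; apply: H; rewrite mem_iota. Qed.

Lemma chk_inj : all (fun a => all (fun b =>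
   all (fun y => P a y == P b y) (iota 0 16) ==> (a == b)) (iota 0 32)) (iota 0 32).
Proof. vm_compute. reflexivity. Qed.
Lemma chk_mono : all (fun a => all (fun b =>
   lecode 5 a b ==> all (fun y => P a y ==> P b y) (iota 0 16)) (iota 0 32)) (iota 0 32).
Proof. vm_compute. reflexivity. Qed.
Lemma chk_monbf : all (fun a => all (fun y => all (fun y' =>
   lecode 4 y y' ==> (P a y ==> P a y')) (iota 0 16)) (iota 0 16)) (iota 0 32).
Proof. vm_compute. reflexivity. Qed.
Lemma chk_nz : all (fun a => P a 15) (iota 0 32).
Proof. vm_compute. reflexivity. Qed.
Lemma chk_cov : all (fun G =>
  (all (fun n => all (fun m => lecode 3 n m ==> (bit G n ==> bit G m)) (iota 0 8)) (iota 0 8)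
   && (G != 0)) ==>
  has (fun a => has (fun e => all (fun n => P a (e + 2 * n) == bit G n) (iota 0 8)) [:: 0; 1])
      (iota 0 32)) (iota 0 256).
Proof. vm_compute. reflexivity. Qed.

Lemma bit8 (b0 b1 b2 b3 b4 b5 b6 b7 : bool) n : n < 8 ->
  bit (b0 + 2 * b1 + 4 * b2 + 8 * b3 + 16 * b4 + 32 * b5 + 64 * b6 + 128 * b7) n
  = nth false [:: b0; b1; b2; b3; b4; b5; b6; b7] n.
Proof.
case: n => [|[|[|[|[|[|[|[|n]]]]]]]] // _;
case: b0; case: b1; case: b2; case: b3; case: b4; case: b5; case: b6; case: b7; by [].
Qed.

Lemma mk3_c3 (z : assign 3) : mk 3 (c3 z) = z.
Proof. by apply: c3_inj; rewrite c3_mk // c3_lt. Qed.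

Lemma c4_subst (z : assign 3) (e : bool) :
  c4 [ffun i : 'I_4 => if unlift ord0 i is Some j then z j else e] = e + 2 * c3 z.
Proof.
rewrite /c4 /c3 !ffunE.
have U : forall j, j < 3 -> unlift ord0 (inord j.+1 : 'I_4) = Some (inord j : 'I_3).
  move=> j Hj; have -> : (inord j.+1 : 'I_4) = lift ord0 (inord j : 'I_3).
    by apply: val_inj; rewrite /= !inordK.
  by rewrite liftK.
rewrite (U 0) // (U 1) // (U 2) //.
have -> : (inord 0 : 'I_4) = ord0 by apply: val_inj; rewrite /= inordK.
rewrite unlift_none.
case: e; case: (z (inord 0)); case: (z (inord 1)); case: (z (inord 2)) => //.
Qed.

Theorem mainTheorem11 :
  exists phi : assign 5 -> boolfun 4,
    injective phi /\
    (forall x y : assign 5, le_assign x y -> le_fun (phi x) (phi y)) /\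
    (forall x : assign 5, in_Fminus (phi x)) /\
    (forall g : boolfun 3, in_Fminus g ->
       exists (x : assign 5) (e : bool), subst1 (phi x) e = g).
Proof.
exists phi0; split.
  move=> x x' H; apply: c5_inj.
  have H1 := all_iota chk_inj (c5_lt x).
  have H2 := all_iota H1 (c5_lt x').
  apply/eqP; apply: (implyP H2); apply/allP => y; rewrite mem_iota add0n => Hy.
  have := congr1 (fun f : boolfun 4 => f (mk 4 y)) H; rewrite /= !ffunE c4_mk //.
  by move=> ->.
split.
  move=> x y Hxy; apply/forallP => z; rewrite !ffunE.
  have H1 := all_iota chk_mono (c5_lt x).
  have H2 := all_iota H1 (c5_lt y).
  rewrite (le_code _ _ c5_bit) in Hxy.
  exact: (all_iota (implyP H2 Hxy) (c4_lt z)).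
split.
  move=> x; apply/andP; split.
    apply/forallP => z; apply/forallP => w; apply/implyP => Hzw; rewrite !ffunE.
    rewrite (le_code _ _ c4_bit) in Hzw.
    have H1 := all_iota chk_monbf (c5_lt x).
    exact: (implyP (all_iota (all_iota H1 (c4_lt z)) (c4_lt w)) Hzw).
  apply/eqP => H0.
  have := congr1 (fun f : boolfun 4 => f (mk 4 15)) H0; rewrite /= !ffunE c4_mk //.
  by rewrite (all_iota chk_nz (c5_lt x)).
move=> g /andP [Hm Hnz].
pose gv n := g (mk 3 n).
pose G := gv 0 + 2 * gv 1 + 4 * gv 2 + 8 * gv 3 + 16 * gv 4 + 32 * gv 5 + 64 * gv 6 + 128 * gv 7.
have HG : forall n, n < 8 -> bit G n = gv n.
  move=> n Hn; rewrite /G bit8 //.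
  by case: n Hn => [|[|[|[|[|[|[|[|n]]]]]]]].
have Glt : G < 256.
  rewrite /G; case: (gv 0); case: (gv 1); case: (gv 2); case: (gv 3);
  case: (gv 4); case: (gv 5); case: (gv 6); case: (gv 7); by [].
move/implyP: (all_iota chk_cov Glt) => Hi.
lapply Hi; last first.
  apply/andP; split.
    apply/allP => n; rewrite mem_iota add0n => Hn.
    apply/allP => m; rewrite mem_iota add0n => Hm'.
    apply/implyP => Hnm; rewrite !HG //.
    move/forallP: Hm => /(_ (mk 3 n)) /forallP /(_ (mk 3 m)).
    by rewrite (le_code _ _ c3_bit) !c3_mk // Hnm.
  apply/eqP => G0; move/negP: Hnz; apply; apply/eqP/ffunP => z.
  rewrite ffunE; have := HG (c3 z) (c3_lt z).
  by rewrite G0 /gv mk3_c3 /bit div0n => <-.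
move/hasP => [a]; rewrite mem_iota add0n => Ha /hasP [e He Hall].
exists (mk 5 a), (e == 1).
apply/ffunP => z; rewrite !ffunE c4_subst c5_mk //.
have -> : ((e == 1) : nat) = e by move: He; rewrite !inE => /orP [] /eqP ->.
rewrite (eqP (all_iota Hall (c3_lt z))) HG ?c3_lt //.
by rewrite /gv mk3_c3.
Qed.
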